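(* Let $X$ be a connected quandle, $a\in X$, and let $\widetilde X$ be the quandle $\mathrm{Ker}(\varepsilon_0)$ with operation $g\lhd h=e_a^{-1}gh^{-1}e_ah$. Then $\widetilde X$ is connected.
   Context: A quandle is a set $X$ with a binary operation $\lhd$ such that $a\lhd a=a$, each $x\mapsto x\lhd a$ is bijective, and $(a\lhd b)\lhd c=(a\lhd c)\lhd(b\lhd c)$. The adjoint group $\mathrm{As}(X)$ has generators $e_x$ ($x\in X$) and relations $e_{x\lhd y}=e_y^{-1}e_xe_y$; it acts on $X$ by $x\cdot e_y=x\lhd y$, and $X$ is connected if this action is transitive. For connected $X$, $\varepsilon_0:\mathrm{As}(X)\to\mathbb{Z}$ is the homomorphism with $\varepsilon_0(e_x)=1$ for all $x$. *)

(* Defs.v *)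
From Stdlib Require Import List ZArith Relations.
Import ListNotations.
Set Implicit Arguments.

Record quandle := Quandle {
  qcar :> Type;
  qop : qcar -> qcar -> qcar;
  qop_idem : forall a, qop a a = a;
  qop_bij : forall a, exists inv : qcar -> qcar,
      (forall x, inv (qop x a) = x) /\ (forall x, qop (inv x) a = x);
  qop_dist : forall a b c, qop (qop a b) c = qop (qop a c) (qop b c)
}.

(* The (right) action of the inner group generated by the bijections
   x |-> x <| y on X; its orbits are the classes of the equivalence closure
   of the one-step relation x ~ x <| y. *)
Definition connected (X : quandle) : Prop :=
  forall x y : X, clos_refl_sym_trans X (fun u v => exists z, v = @qop X u z) x y.

Section Adjoint.
Variable X : quandle.

(* Words in the generators e_x (true) and e_x^{-1} (false); the product in
   As(X) is concatenation (reading left to right). *)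
Definition word := list (X * bool).

Definition winv (w : word) : word := rev (map (fun p => (fst p, negb (snd p))) w).

Definition gen (x : X) : word := [(x, true)].
Definition geninv (x : X) : word := [(x, false)].

Inductive As_basic : word -> word -> Prop :=
| As_cancel : forall x b, As_basic [(x, b); (x, negb b)] []
| As_rel : forall x y, As_basic [(@qop X x y, true)] [(y, false); (x, true); (y, true)].

Inductive As_eq : word -> word -> Prop :=
| As_eq_refl : forall w, As_eq w w
| As_eq_sym : forall u v, As_eq u v -> As_eq v u
| As_eq_trans : forall u v w, As_eq u v -> As_eq v w -> As_eq u w
| As_eq_ctx : forall l u v r, As_basic u v -> As_eq (l ++ u ++ r) (l ++ v ++ r).

Definition eps0 (w : word) : Z :=
  @fold_right Z (X * bool)
  (fun p s => ((if snd p then 1 else -1) + s)%Z) 0%Z w.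

Definition tilde_op (a : X) (g h : word) : word :=
  geninv a ++ g ++ winv h ++ gen a ++ h.

Definition tilde_connected (a : X) : Prop :=
  forall g h : word, eps0 g = 0%Z -> eps0 h = 0%Z ->
    clos_refl_sym_trans word
      (fun u v => As_eq u v \/ exists k, eps0 k = 0%Z /\ As_eq v (tilde_op a u k))
      g h.
End Adjoint.

(* Main.v *)
Require Import Defs.
From Stdlib Require Import List ZArith Relations Lia Bool.
Import ListNotations.
Unset Implicit Arguments.

Lemma As_ctx {X : quandle} (l r u v : word X) :
  As_eq u v -> As_eq (l ++ u ++ r) (l ++ v ++ r).
Proof.
  intro H; induction H.
  - apply As_eq_refl.
  - apply As_eq_sym; auto.
  - eapply As_eq_trans; eauto.
  - rewrite <- !app_assoc. pose proof (As_eq_ctx (l ++ l0) (r0 ++ r) H) as H'.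
    rewrite <- !app_assoc in H'. exact H'.
Qed.

Lemma As_app {X : quandle} (u u' v v' : word X) :
  As_eq u u' -> As_eq v v' -> As_eq (u ++ v) (u' ++ v').
Proof.
  intros H1 H2. eapply As_eq_trans.
  - pose proof (As_ctx [] v _ _ H1) as H. simpl in H. exact H.
  - pose proof (As_ctx u' [] _ _ H2) as H. rewrite !app_nil_r in H. exact H.
Qed.

Lemma As_of_eq {X : quandle} (u v : word X) : u = v -> As_eq u v.
Proof. intros ->; apply As_eq_refl. Qed.

Lemma winv_app {X : quandle} (u v : word X) : winv (u ++ v) = winv v ++ winv u.
Proof. unfold winv. rewrite map_app, rev_app_distr. reflexivity. Qed.

Lemma winv_invol {X : quandle} (u : word X) : winv (winv u) = u.
Proof.
  unfold winv. rewrite map_rev, rev_involutive, map_map.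
  induction u as [|[x b] u IH]; simpl; [reflexivity|]. rewrite negb_involutive. f_equal. exact IH.
Qed.

Lemma winv_cons {X : quandle} (p : X * bool) (u : word X) :
  winv (p :: u) = winv u ++ [(fst p, negb (snd p))].
Proof. reflexivity. Qed.

Lemma canc_r {X : quandle} (w : word X) : As_eq (w ++ winv w) [].
Proof.
  induction w as [|[x b] w IH]; simpl.
  - apply As_eq_refl.
  - rewrite winv_cons. simpl.
    eapply As_eq_trans.
    + pose proof (As_ctx [(x, b)] [(x, negb b)] _ _ IH) as H.
      rewrite app_assoc in H. simpl in H. rewrite app_assoc. exact H.
    + pose proof (As_eq_ctx [] [] (@As_cancel X x b)) as H. simpl in H. exact H.
Qed.

Lemma canc_l {X : quandle} (w : word X) : As_eq (winv w ++ w) [].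
Proof. pose proof (canc_r (winv w)) as H. rewrite winv_invol in H. exact H. Qed.

Lemma canc_mid {X : quandle} (A l w r : word X) :
  A = l ++ w ++ winv w ++ r -> As_eq A (l ++ r).
Proof.
  intros ->. pose proof (As_ctx l r _ _ (canc_r w)) as H. rewrite !app_assoc in *.
  simpl in H. rewrite <- !app_assoc in *. exact H.
Qed.

Lemma canc_mid' {X : quandle} (A l w r : word X) :
  A = l ++ winv w ++ w ++ r -> As_eq A (l ++ r).
Proof.
  intros ->. pose proof (As_ctx l r _ _ (canc_l w)) as H. rewrite !app_assoc in *.
  simpl in H. rewrite <- !app_assoc in *. exact H.
Qed.

Lemma eps0_cons {X : quandle} (p : X * bool) (u : word X) :
  eps0 (p :: u) = ((if snd p then 1 else -1) + eps0 u)%Z.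
Proof. reflexivity. Qed.

Lemma eps0_app {X : quandle} (u v : word X) : eps0 (u ++ v) = (eps0 u + eps0 v)%Z.
Proof. induction u; [reflexivity|]. rewrite <- app_comm_cons, !eps0_cons, IHu. lia. Qed.

Lemma eps0_winv {X : quandle} (u : word X) : eps0 (winv u) = (- eps0 u)%Z.
Proof.
  induction u as [|[x b] u IH]; [reflexivity|].
  rewrite winv_cons, eps0_app, IH, !eps0_cons. change (eps0 (@nil (X*bool))) with 0%Z. destruct b; cbn [fst snd negb]; lia.
Qed.

Lemma As_eps {X : quandle} (u v : word X) : As_eq u v -> eps0 u = eps0 v.
Proof.
  intro H; induction H; try congruence.
  rewrite !eps0_app. f_equal. f_equal.
  destruct H; rewrite ?eps0_cons; change (eps0 (@nil (X*bool))) with 0%Z; try destruct b; cbn [fst snd negb]; lia.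
Qed.

Definition phi {X : quandle} (a : X) (g : word X) : word X := geninv _ a ++ g ++ gen _ a.
Definition phii {X : quandle} (a : X) (g : word X) : word X := gen _ a ++ g ++ geninv _ a.
Definition comm {X : quandle} (a : X) (h : word X) : word X := geninv _ a ++ winv h ++ gen _ a ++ h.
Definition Rt {X : quandle} (a : X) : word X -> word X -> Prop :=
  fun u v => As_eq u v \/ exists k, eps0 k = 0%Z /\ As_eq v (tilde_op a u k).
Definition E {X : quandle} (a : X) := clos_refl_sym_trans (word X) (Rt a).

Lemma winv_gen {X : quandle} (a : X) : winv (gen _ a) = geninv _ a.
Proof. reflexivity. Qed.
Lemma winv_geninv {X : quandle} (a : X) : winv (geninv _ a) = gen _ a.
Proof. reflexivity. Qed.

Ltac asnorm := unfold comm, phi, phii, tilde_op in *;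
  rewrite ?winv_app, ?winv_invol, ?winv_gen, ?winv_geninv, ?app_nil_r;
  rewrite <- ?app_assoc; reflexivity.

Lemma E_As {X : quandle} (a : X) u v : As_eq u v -> E a u v.
Proof. intro H. apply rst_step. left. exact H. Qed.

Lemma E_move {X : quandle} (a : X) u k : eps0 k = 0%Z -> E a u (tilde_op a u k).
Proof. intro H. apply rst_step. right. exists k. split; [exact H | apply As_eq_refl]. Qed.

Lemma E_phi {X : quandle} (a : X) g : E a g (phi a g).
Proof.
  eapply rst_trans. apply (@E_move X a g []); reflexivity.
  apply E_As, As_of_eq. asnorm.
Qed.

Lemma RE {X : quandle} (a : X) k g g' : eps0 k = 0%Z -> E a g g' -> E a (g ++ k) (g' ++ k).
Proof.
  intros Hk H. induction H.
  - destruct H as [H | [h [Hh H]]].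
    + apply E_As, As_app; [exact H | apply As_eq_refl].
    + eapply rst_trans. apply (@E_move X a (x ++ k) (h ++ k)).
      { rewrite eps0_app; lia. }
      apply E_As. apply As_eq_sym. eapply As_eq_trans.
      { apply As_app; [exact H | apply As_eq_refl]. }
      apply As_eq_sym. eapply As_eq_trans.
      { apply (@canc_mid X _ (geninv _ a ++ x) k (winv h ++ gen _ a ++ h ++ k)). asnorm. }
      apply As_of_eq. asnorm.
  - apply rst_refl.
  - apply rst_sym; auto.
  - eapply rst_trans; eauto.
Qed.

Inductive G {X : quandle} (a : X) : word X -> Prop :=
| G_comm h : eps0 h = 0%Z -> G a (comm a h)
| G_nil : G a []
| G_app u v : G a u -> G a v -> G a (u ++ v)
| G_inv u : G a u -> G a (winv u)
| G_phi u : G a u -> G a (phi a u)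
| G_phii u : G a u -> G a (phii a u)
| G_eq u v : As_eq u v -> G a u -> G a v.

Lemma eps0_gen {X : quandle} (a : X) : eps0 (gen _ a) = 1%Z.
Proof. reflexivity. Qed.
Lemma eps0_geninv {X : quandle} (a : X) : eps0 (geninv _ a) = (-1)%Z.
Proof. reflexivity. Qed.

Ltac epsnorm := unfold comm, phi, phii, tilde_op in *;
  rewrite ?eps0_app, ?eps0_winv, ?eps0_gen, ?eps0_geninv in *; lia.

Lemma G_eps {X : quandle} (a : X) g : G a g -> eps0 g = 0%Z.
Proof.
  intro H; induction H; try epsnorm.
  - reflexivity.
  - apply As_eps in H. lia.
Qed.

Lemma G_E {X : quandle} (a : X) g : G a g -> E a g [].
Proof.
  intro H; induction H.
  - apply rst_sym. apply (@E_move X a [] h H).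
  - apply rst_refl.
  - eapply rst_trans. apply (RE a v u [] (G_eps a v H0) IHG1). exact IHG2.
  - apply rst_sym. eapply rst_trans. 2: apply (RE a (winv u) u []); [rewrite eps0_winv, (G_eps a u H); reflexivity | exact IHG].
    apply E_As, As_eq_sym, canc_r.
  - eapply rst_trans; [apply rst_sym, E_phi | exact IHG].
  - eapply rst_trans; [apply E_phi |]. eapply rst_trans; [|exact IHG].
    apply E_As. eapply As_eq_trans.
    { apply (@canc_mid' X _ [] (gen _ a) (u ++ geninv _ a ++ gen _ a)). asnorm. }
    eapply As_eq_trans.
    { apply (@canc_mid X _ u (geninv _ a) []). asnorm. }
    apply As_of_eq; asnorm.
  - eapply rst_trans; [| exact IHG]. apply E_As, As_eq_sym, H.
Qed.

Lemma G_normal {X : quandle} (a : X) g : G a g -> forall k, eps0 k = 0%Z -> G a (winv k ++ g ++ k).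
Proof.
  intro H; induction H; intros k Hk.
  - eapply G_eq; [| apply G_app; [apply G_inv, G_comm, Hk | apply (G_comm a (h ++ k))]].
    2: rewrite eps0_app; lia.
    eapply As_eq_trans.
    { apply (@canc_mid X _ (winv k ++ geninv _ a ++ k) (gen _ a) (winv k ++ winv h ++ gen _ a ++ h ++ k)). asnorm. }
    eapply As_eq_trans.
    { apply (@canc_mid X _ (winv k ++ geninv _ a) k (winv h ++ gen _ a ++ h ++ k)). asnorm. }
    apply As_of_eq; asnorm.
  - eapply G_eq; [| apply G_nil]. apply As_eq_sym.
    eapply As_eq_trans. { apply (@canc_mid' X _ [] k []). asnorm. } apply As_eq_refl.
  - eapply G_eq; [| apply G_app; [apply (IHG1 k Hk) | apply (IHG2 k Hk)]].
    eapply As_eq_trans. { apply (@canc_mid X _ (winv k ++ u) k (v ++ k)). asnorm. }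
    apply As_of_eq; asnorm.
  - eapply G_eq; [| apply G_inv, (IHG k Hk)]. apply As_of_eq; asnorm.
  - eapply G_eq; [| apply G_phi, (IHG (phii a k))]. 2: epsnorm.
    eapply As_eq_trans.
    { apply (@canc_mid' X _ [] (gen _ a) (winv k ++ geninv _ a ++ u ++ gen _ a ++ k ++ geninv _ a ++ gen _ a)). asnorm. }
    eapply As_eq_trans.
    { apply (@canc_mid X _ (winv k ++ geninv _ a ++ u ++ gen _ a ++ k) (geninv _ a) []). asnorm. }
    apply As_of_eq; asnorm.
  - eapply G_eq; [| apply G_phii, (IHG (phi a k))]. 2: epsnorm.
    eapply As_eq_trans.
    { apply (@canc_mid X _ [] (gen _ a) (winv k ++ gen _ a ++ u ++ geninv _ a ++ k ++ gen _ a ++ geninv _ a)). asnorm. }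
    eapply As_eq_trans.
    { apply (@canc_mid X _ (winv k ++ gen _ a ++ u ++ geninv _ a ++ k) (gen _ a) []). asnorm. }
    apply As_of_eq; asnorm.
  - eapply G_eq; [| apply (IHG k Hk)]. apply As_app; [apply As_eq_refl|].
    apply As_app; [exact H | apply As_eq_refl].
Qed.

Lemma G_cancel_left {X : quandle} (a : X) u v : G a (u ++ v) -> G a u -> G a v.
Proof.
  intros H1 H2. eapply G_eq; [| apply G_app; [apply G_inv, H2 | exact H1]].
  eapply As_eq_trans. { apply (@canc_mid' X _ [] u v). asnorm. } apply As_eq_refl.
Qed.

Definition tt {X : quandle} (a x : X) : word X := [(x, true); (a, false)].

Lemma tt_eq {X : quandle} (a u z : X) :
  As_eq (tt a (qop X u z))
    (comm a (winv (winv (tt a z) ++ tt a u)) ++ (winv (tt a z) ++ tt a u ++ tt a z)).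
Proof.
  apply As_eq_sym.
  eapply As_eq_trans.
  { apply (@canc_mid X _ (geninv _ a ++ winv (tt a z) ++ tt a u ++ gen _ a ++ winv (tt a u)) (tt a z) (tt a u ++ tt a z)). asnorm. }
  eapply As_eq_trans.
  { apply (@canc_mid' X _ (geninv _ a ++ winv (tt a z) ++ tt a u ++ gen _ a) (tt a u) (tt a z)). asnorm. }
  apply As_eq_sym.
  eapply As_eq_trans.
  { pose proof (@As_eq_ctx X [] _ _ [(a, false)] (@As_rel X u z)) as H. simpl in H. exact H. }
  apply As_eq_sym.
  eapply As_eq_trans.
  { apply (@canc_mid X _ [] (geninv _ a) [(z, false); (u, true); (a, false); (a, true); (z, true); (a, false)]). reflexivity. }
  eapply As_eq_trans.
  { apply (@canc_mid' X _ [(z, false); (u, true)] (gen _ a) [(z, true); (a, false)]). reflexivity. }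
  apply As_eq_refl.
Qed.

Lemma tt_eps {X : quandle} (a x : X) : eps0 (tt a x) = 0%Z.
Proof. reflexivity. Qed.

Lemma tt_transport {X : quandle} (a u z : X) : G a (tt a u) <-> G a (tt a (qop X u z)).
Proof.
  split; intro H.
  - eapply G_eq; [apply As_eq_sym, tt_eq|]. apply G_app.
    + apply G_comm. rewrite eps0_winv, eps0_app, eps0_winv, !tt_eps. reflexivity.
    + apply G_normal; [exact H | apply tt_eps].
  - apply (G_eq a _ _ (tt_eq a u z)) in H.
    assert (Hc : G a (comm a (winv (winv (tt a z) ++ tt a u)))).
    { apply G_comm. rewrite eps0_winv, eps0_app, eps0_winv, !tt_eps. reflexivity. }
    pose proof (G_cancel_left a _ _ H Hc) as H0. clear H. rename H0 into H.
    apply (fun H' => G_normal a _ H' (winv (tt a z))) in H; [| rewrite eps0_winv, tt_eps; reflexivity].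
    eapply G_eq; [| exact H].
    eapply As_eq_trans.
    { apply (@canc_mid X _ [] (tt a z) (tt a u ++ tt a z ++ winv (tt a z))). asnorm. }
    eapply As_eq_trans.
    { apply (@canc_mid X _ (tt a u) (tt a z) []). asnorm. }
    apply As_of_eq; asnorm.
Qed.

Lemma G_tt {X : quandle} (a : X) : connected X -> forall x, G a (tt a x).
Proof.
  intros Hc x.
  assert (Ha : G a (tt a a)).
  { eapply G_eq; [| apply G_nil]. apply As_eq_sym.
    pose proof (@As_eq_ctx X [] _ _ [] (@As_cancel X a true)) as H. simpl in H. exact H. }
  assert (P : forall u v, clos_refl_sym_trans X (fun u v => exists z, v = qop X u z) u v ->
            (G a (tt a u) <-> G a (tt a v))).
  { intros u v H. induction H.
    - destruct H as [z ->]. apply tt_transport.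
    - tauto.
    - tauto.
    - tauto. }
  apply (P a x (Hc a x)). exact Ha.
Qed.

Lemma G_conj_a {X : quandle} (a : X) u : Forall (fun p => fst p = a) u ->
  forall g, G a g -> G a (winv u ++ g ++ u).
Proof.
  induction u as [|[y b] u IH]; intros HF g Hg.
  - eapply G_eq; [| exact Hg]. apply As_of_eq. asnorm.
  - apply Forall_cons_iff in HF. destruct HF as [Hy HF']. simpl in Hy. subst y.
    rewrite winv_cons.
    eapply G_eq; [| apply (IH HF' ([(a, negb b)] ++ g ++ [(a, b)]))].
    + apply As_of_eq. simpl fst; simpl snd. rewrite <- ?app_assoc. reflexivity.
    + destruct b; simpl negb.
      * apply (G_phi a g Hg).
      * apply (G_phii a g Hg).
Qed.

Lemma decomp {X : quandle} (a : X) : connected X ->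
  forall w : word X, exists b n, G a (w ++ repeat (a, b) n).
Proof.
  intros Hc w. induction w as [|[x s] w IH] using rev_ind.
  - exists true, 0. apply G_nil.
  - destruct IH as [b [n Hw]].
    set (r := repeat (a, b) n) in *.
    assert (Hf : G a [(x, s); (a, negb s)]).
    { destruct s.
      - apply (G_tt a Hc x).
      - eapply G_eq; [| apply G_phi, G_inv, (G_tt a Hc x)].
        eapply As_eq_trans.
        { apply (@canc_mid' X _ [] (gen _ a) [(x, false); (a, true)]). reflexivity. }
        apply As_eq_refl. }
    assert (Hr : Forall (fun p => fst p = a) r).
    { apply Forall_forall. intros p Hp. unfold r in Hp. apply repeat_spec in Hp. subst; reflexivity. }
    pose proof (G_app a _ _ Hw (G_conj_a a r Hr _ Hf)) as H1.
    assert (H2 : G a ((w ++ [(x, s)]) ++ (a, negb s) :: r)).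
    { eapply G_eq; [| exact H1].
      eapply As_eq_trans. { apply (@canc_mid X _ w r ([(x, s); (a, negb s)] ++ r)). asnorm. }
      apply As_of_eq. rewrite <- ?app_assoc. reflexivity. }
    destruct (Bool.bool_dec (negb s) b) as [E1 | E1].
    + exists b, (S n). unfold r in H2. rewrite E1 in H2. exact H2.
    + assert (b = s) by (destruct b, s; simpl in *; congruence). subst b.
      destruct n as [|n].
      * exists (negb s), 1. exact H2.
      * exists s, n. eapply G_eq; [| exact H2].
        unfold r. simpl repeat.
        pose proof (@As_eq_ctx X (w ++ [(x, s)]) _ _ (repeat (a, s) n) (@As_cancel X a (negb s))) as H.
        rewrite negb_involutive in H. simpl in H. exact H.
Qed.

Lemma eps0_repeat {X : quandle} (a : X) b n :
  eps0 (repeat (a, b) n) = (if b then Z.of_nat n else - Z.of_nat n)%Z.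
Proof.
  induction n; [destruct b; reflexivity|]. simpl repeat. rewrite eps0_cons, IHn.
  destruct b; cbn [snd]; lia.
Qed.

Theorem proposition5p2 (X : quandle) (a : X) :
  connected X -> @tilde_connected X a.
Proof.
  intros Hc g h Hg Hh.
  assert (K : forall w : word X, eps0 w = 0%Z -> E a w []).
  { intros w Hw. destruct (decomp a Hc w) as [b [n H]].
    pose proof (G_eps a _ H) as He. rewrite eps0_app, Hw, eps0_repeat in He.
    assert (n = 0) by (destruct b; lia). subst n. simpl in H. rewrite app_nil_r in H.
    apply G_E, H. }
  exact (rst_trans _ _ _ _ _ (K g Hg) (rst_sym _ _ _ _ (K h Hh))).
Qed.
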